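(* Let $\alpha,\beta$ be compositions with $\beta\subseteq\alpha$ such that $\alpha/\beta$ is reduced and $\beta$ is a partition (i.e. $\beta_1\ge\beta_2\ge\cdots$). Then $\mathrm{SET}(\alpha/\beta)$ has a unique minimal element, $S^{\mathrm{col}}_{\alpha/\beta}$. Equivalently, $\mathrm{SET}(\alpha/\beta)$ coincides with the interval $[S^{\mathrm{col}}_{\alpha/\beta},S^{\mathrm{row}}_{\alpha/\beta}]$ of $\mathrm{SIT}(\alpha/\beta)$, and its rank is $\binom{|\alpha/\beta|}{2}-\sum_{c\in\alpha/\beta}\mathrm{ls}(c)$.
   Context: A composition $\alpha=(\alpha_1,\ldots,\alpha_k)$ is a finite sequence of positive integers, $|\alpha|=\sum\alpha_i$. Its diagram has rows numbered from the bottom (row 1 lowest), row $i$ consisting of the cells in columns $1,\ldots,\alpha_i$. For $\beta\subseteq\alpha$ (i.e. $\ell(\beta)\le\ell(\alpha)$, $\beta_j\le\alpha_j$), the skew diagram $\alpha/\beta$ consists of the cells in row $i$, column $j$ with $\beta_i<j\le\alpha_i$ ($\beta_i=0$ for $i>\ell(\beta)$); $n=|\alpha/\beta|$. $\alpha/\beta$ is reduced if it has no empty row (no $i$ with $\alpha_i=\beta_i$). $\mathrm{SIT}(\alpha/\beta)$: bijective fillings of $\alpha/\beta$ with $1,\ldots,n$ with rows increasing left to right and column-1 entries increasing bottom to top. $\mathrm{SET}(\alpha/\beta)\subseteq\mathrm{SIT}(\alpha/\beta)$: fillings with all rows increasing left to right and all columns increasing bottom to top. For $1\le i\le n-1$,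 $\pi_i(T)=T$ if $i+1$ is in a strictly higher row than $i$, $\pi_i(T)=s_i(T)$ (swap $i$ and $i+1$) if $i+1$ is in a strictly lower row than $i$, and $\pi_i(T)=0$ otherwise. The poset order on $\mathrm{SIT}(\alpha/\beta)$: $T\le T'$ iff $T'$ is obtained from $T$ by a sequence of operators $\pi_i$ (all intermediate results nonzero); this poset is graded with rank function given by the number of inversions of the reading word, and $\mathrm{SET}(\alpha/\beta)$ has the induced order. $S^{\mathrm{row}}_{\alpha/\beta}$ is filled with $1,\ldots,n$ consecutively along rows left to right, from the bottom row upward; $S^{\mathrm{col}}_{\alpha/\beta}$ is filled consecutively along columns bottom to top, from the leftmost column rightward. For a cell $c$, $\mathrm{ls}(c)$ is the number of cells of $\alpha/\beta$ other than $c$ weakly southwest of $c$. *)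

(* Defs.v *)
From mathcomp Require Import all_boot.
Set Implicit Arguments. Unset Strict Implicit. Unset Printing Implicit Defensive.

(* Conventions: a composition is a [seq nat] with positive entries;
   alpha_i is [nth 0 a i] with rows indexed from 0 (row 0 = paper's row 1,
   the bottom row); columns are 1-indexed as in the paper.
   A cell is a pair (row, column). *)

Definition composition (a : seq nat) : bool := all (fun x => 0 < x) a.

Definition subcomp (b a : seq nat) : Prop :=
  size b <= size a /\ forall j, nth 0 b j <= nth 0 a j.

(* alpha/beta has no empty row *)
Definition reduced (a b : seq nat) : Prop :=
  forall i, i < size a -> nth 0 b i != nth 0 a i.

Definition is_partition (b : seq nat) : bool := sorted geq b.

Definition cells (a b : seq nat) : seq (nat * nat) :=
  flatten [seq [seq (r, j) | j <- iota (nth 0 b r).+1 (nth 0 a r - nth 0 b r)]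
          | r <- iota 0 (size a)].

Definition skew_size (a b : seq nat) : nat := size (cells a b).

(* A filling is stored as the list of its rows (bottom row first), each row
   listing the entries of its cells from left to right. *)
Definition tab := seq (seq nat).

Definition mkT (a b : seq nat) (f : nat * nat -> nat) : tab :=
  [seq [seq f (r, j) | j <- iota (nth 0 b r).+1 (nth 0 a r - nth 0 b r)]
  | r <- iota 0 (size a)].

Definition entry (b : seq nat) (T : tab) (c : nat * nat) : nat :=
  nth 0 (nth [::] T c.1) (c.2 - (nth 0 b c.1).+1).

Definition is_filling (a b : seq nat) (T : tab) : Prop :=
  [/\ size T = size a,
      (forall r, r < size a -> size (nth [::] T r) = nth 0 a r - nth 0 b r)
    & perm_eq (flatten T) (iota 1 (skew_size a b))].

Definition rows_increasing (T : tab) : bool := all (sorted ltn) T.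

Definition SIT (a b : seq nat) (T : tab) : Prop :=
  [/\ is_filling a b T, rows_increasing T &
      forall r r', r < r' -> r' < size a -> nth 0 b r = 0 -> nth 0 b r' = 0 ->
        entry b T (r, 1) < entry b T (r', 1)].

Definition SET (a b : seq nat) (T : tab) : Prop :=
  [/\ is_filling a b T, rows_increasing T &
      forall c c', c \in cells a b -> c' \in cells a b ->
        c.2 = c'.2 -> c.1 < c'.1 -> entry b T c < entry b T c'].

Definition rowof (T : tab) (v : nat) : nat := find (fun row => v \in row) T.

Definition swap_i (i : nat) (T : tab) : tab :=
  map (map (fun x => if x == i then i.+1 else if x == i.+1 then i else x)) T.

(* pi_i ; [None] stands for 0 *)
Definition pi_op (i : nat) (T : tab) : option tab :=
  if rowof T i < rowof T i.+1 then Some T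
  else if rowof T i.+1 < rowof T i then Some (swap_i i T)
  else None.

Definition pi_step (a b : seq nat) (T T' : tab) : Prop :=
  exists i, [/\ 1 <= i, i <= (skew_size a b).-1 & pi_op i T = Some T'].

Inductive sit_le (a b : seq nat) : tab -> tab -> Prop :=
| sit_le_refl T : sit_le a b T T
| sit_le_step T T' T'' : pi_step a b T T' -> sit_le a b T' T'' -> sit_le a b T T''.

Definition S_row (a b : seq nat) : tab :=
  mkT a b (fun c => (count (fun c' : nat * nat =>
             (c'.1 < c.1) || ((c'.1 == c.1) && (c'.2 < c.2))) (cells a b)).+1).

Definition S_col (a b : seq nat) : tab :=
  mkT a b (fun c => (count (fun c' : nat * nat =>
             (c'.2 < c.2) || ((c'.2 == c.2) && (c'.1 < c.1))) (cells a b)).+1).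

Definition ls (a b : seq nat) (c : nat * nat) : nat :=
  count (fun c' : nat * nat => [&& c' != c, c'.1 <= c.1 & c'.2 <= c.2]) (cells a b).

Definition SET_minimal (a b : seq nat) (T : tab) : Prop :=
  SET a b T /\ forall T', SET a b T' -> sit_le a b T' T -> T' = T.

Fixpoint strict_chain (a b : seq nat) (s : seq tab) : Prop :=
  match s with
  | x :: ((y :: _) as t) => (sit_le a b x y /\ x <> y) /\ strict_chain a b t
  | _ => True
  end.

Definition SET_rank (a b : seq nat) (r : nat) : Prop :=
  (exists s, [/\ size s = r.+1, (forall T, T \in s -> SET a b T) & strict_chain a b s])
  /\ (forall s, (forall T, T \in s -> SET a b T) -> strict_chain a b s -> size s <= r.+1).

(* Main.v *)
Require Import Defs.
From mathcomp Require Import all_boot.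
From mathcomp Require Import zify.
Set Implicit Arguments. Unset Strict Implicit. Unset Printing Implicit Defensive.
Section Cells.
Variables a b : seq nat.
Local Notation C := (cells a b).
Local Notation n := (skew_size a b).

Definition shapeOK (T : tab) := size T = size a /\
  forall r, r < size a -> size (nth [::] T r) = nth 0 a r - nth 0 b r.

Lemma mem_cells c : (c \in C) = (c.1 < size a) && (nth 0 b c.1 < c.2 <= nth 0 a c.1).
Proof.
case: c => r j /=; apply/flatten_mapP/idP.
  case=> r' /[!mem_iota] Hr /mapP [j' /[!mem_iota] Hj' [-> ->]]; apply/andP; split; lia.
move=> /andP[Hr /andP[H1 H2]]; exists r; rewrite ?mem_iota; first lia.
apply/mapP; exists j => //; rewrite mem_iota; lia.
Qed.

Lemma uniq_cells : uniq C.
Proof.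
apply: allpairs_uniq_dep; first exact: iota_uniq.
  by move=> r _; apply: iota_uniq.
by move=> [x1 x2] [y1 y2] _ _ /= [-> ->].
Qed.

Lemma nth_map_def (T1 T2 : Type) (g : T1 -> T2) x0 y0 s k :
  g x0 = y0 -> nth y0 (map g s) k = g (nth x0 s k).
Proof.
move=> <-; case: (ltnP k (size s)) => H; first exact: nth_map.
by rewrite !nth_default ?size_map.
Qed.

Lemma entry_mkT f c : c \in C -> entry b (mkT a b f) c = f c.
Proof.
case: c => r j; rewrite mem_cells /= => /andP[Hr /andP[H1 H2]].
rewrite /entry /mkT /= (nth_map 0) ?size_iota // nth_iota // add0n.
rewrite (nth_map 0) ?size_iota; last lia.
rewrite nth_iota; last lia.
congr f; congr pair; lia.
Qed.

Lemma shape_mkT f : shapeOK (mkT a b f).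
Proof.
split; first by rewrite size_map size_iota.
by move=> r Hr; rewrite (nth_map 0) ?size_iota // size_map size_iota nth_iota.
Qed.

Lemma mkT_entry T : shapeOK T -> mkT a b (entry b T) = T.
Proof.
case=> Hs Hr; apply: (@eq_from_nth _ [::]); rewrite size_map size_iota ?Hs //.
move=> r Hr'; rewrite (nth_map 0) ?size_iota // nth_iota // add0n.
apply: (@eq_from_nth _ 0); rewrite size_map size_iota ?Hr //.
move=> k Hk; rewrite (nth_map 0) ?size_iota // nth_iota // /entry /=.
congr nth; lia.
Qed.

Lemma mkT_eq_in f g : {in C, f =1 g} -> mkT a b f = mkT a b g.
Proof.
move=> H; rewrite /mkT; apply/eq_in_map => r; rewrite mem_iota => /andP[_ Hr].
apply/eq_in_map => j; rewrite mem_iota => /andP[H1 H2].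
apply: H; rewrite mem_cells /=; apply/andP; split; lia.
Qed.

Lemma flatten_mkT f : flatten (mkT a b f) = map f C.
Proof.
rewrite /cells map_flatten -map_comp; congr flatten; apply: eq_map => r /=.
by rewrite -map_comp.
Qed.

End Cells.
Lemma uniq_map_inj_in (T1 T2 : eqType) (f : T1 -> T2) (s : seq T1) :
  uniq (map f s) -> {in s &, injective f}.
Proof.
elim: s => [//|x s IH] /= /andP[Hx Hu] c d.
rewrite !inE => /orP[/eqP->|Hc] /orP[/eqP->|Hd] //.
- by move=> E; move: Hx; rewrite E map_f.
- by move=> E; move: Hx; rewrite -E map_f.
- exact: IH.
Qed.

Lemma count_iota_lt k m len : count (fun v => v < k) (iota m len) = minn len (k - m).
Proof.
elim: len m => [|len IH] m /=; first by rewrite min0n.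
rewrite IH; case: ltnP => H /=; lia.
Qed.

Section Fill.
Variables a b : seq nat.
Local Notation C := (cells a b).
Local Notation n := (skew_size a b).

Lemma filling_perm T : is_filling a b T -> perm_eq (map (entry b T) C) (iota 1 n).
Proof. by case=> Hs Hr Hp; rewrite -flatten_mkT mkT_entry. Qed.

Lemma filling_shape T : is_filling a b T -> shapeOK a b T.
Proof. by case. Qed.

Lemma inj_entry T : is_filling a b T -> {in C &, injective (entry b T)}.
Proof.
move=> H; apply: uniq_map_inj_in; rewrite (perm_uniq (filling_perm H)).
exact: iota_uniq.
Qed.

Lemma entry_range T c : is_filling a b T -> c \in C -> 0 < entry b T c <= n.
Proof.
move=> H Hc; have : entry b T c \in iota 1 n.
  by rewrite -(perm_mem (filling_perm H)) map_f.
rewrite mem_iota; lia.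
Qed.

Lemma entry_ex T v : is_filling a b T -> 0 < v <= n -> exists2 c, c \in C & entry b T c = v.
Proof.
move=> H Hv; have : v \in map (entry b T) C.
  by rewrite (perm_mem (filling_perm H)) mem_iota; lia.
by case/mapP=> c Hc ->; exists c.
Qed.

Lemma entry_count T c : is_filling a b T -> c \in C ->
  entry b T c = (count (fun d => entry b T d < entry b T c) C).+1.
Proof.
move=> H Hc; have := entry_range H Hc.
have -> : count (fun d => entry b T d < entry b T c) C =
          count (fun v => v < entry b T c) (map (entry b T) C) by rewrite count_map.
rewrite (permP (filling_perm H)) count_iota_lt; lia.
Qed.

Lemma rowinc_cells T : shapeOK a b T -> rows_increasing T ->
  forall c d, c \in C -> d \in C -> c.1 = d.1 -> c.2 < d.2 -> entry b T c < entry b T d.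
Proof.
case=> Hs Hr Hinc [r j] [r' j'] /[!mem_cells] /= /andP[H1 /andP[H2 H3]]
  /andP[H1' /andP[H2' H3']] Er; subst r' => Hj.
have Hrow : sorted ltn (nth [::] T r).
  by move/allP: Hinc; apply; apply: mem_nth; rewrite Hs.
rewrite /entry /=; apply: (sorted_ltn_nth ltn_trans) => //; rewrite ?inE ?Hr //; lia.
Qed.

Lemma cells_rowinc T : shapeOK a b T ->
  (forall c d, c \in C -> d \in C -> c.1 = d.1 -> c.2 < d.2 -> entry b T c < entry b T d) ->
  rows_increasing T.
Proof.
case=> Hs Hr H; apply/allP => row /(nthP [::]) [r Hr' <-].
rewrite Hs in Hr'.
rewrite sorted_pairwise; last exact: ltn_trans.
apply/(pairwiseP 0) => k l; rewrite !inE Hr // => Hk Hl Hkl.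
have := H (r, (nth 0 b r).+1 + k) (r, (nth 0 b r).+1 + l).
rewrite /entry /= !addKn; apply => //.
all: rewrite ?mem_cells /=; try (apply/and3P; split); lia.
Qed.

Lemma rowof_entry T x : is_filling a b T -> x \in C -> rowof T (entry b T x) = x.1.
Proof.
case: x => x1 x2 /=.
move=> H Hx; have [Hs Hr _] := H.
have Hx' := Hx; rewrite mem_cells /= in Hx'; case/andP: Hx' => Hx1 /andP[Hx2 Hx3].
have key : forall r, r < size T -> (entry b T (x1, x2) \in nth [::] T r) = (r == x1).
  move=> r; rewrite Hs => Hrs; apply/idP/eqP.
    case/(nthP 0) => k; rewrite Hr // => Hk Ek.
    have Hc : (r, (nth 0 b r).+1 + k) \in C by rewrite mem_cells /=; apply/and3P; split; lia.
    have E : entry b T (r, (nth 0 b r).+1 + k) = entry b T (x1, x2) by rewrite /entry /= addKn.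
    by have /= [] := inj_entry H Hc Hx E.
  move=> ->; apply: mem_nth; rewrite Hr //=; lia.
have Hhas : has (fun row => entry b T (x1, x2) \in row) T.
  by apply/(has_nthP [::]); exists x1; rewrite ?Hs // key ?Hs.
rewrite /rowof; apply/eqP; rewrite -key; first exact: (nth_find [::] Hhas).
by rewrite -has_find.
Qed.

End Fill.
Definition sw (i v : nat) := if v == i then i.+1 else if v == i.+1 then i else v.

Lemma swK i : involutive (sw i).
Proof. move=> v; rewrite /sw; do !case: eqP => //=; lia. Qed.

Lemma sw_lt i u v : ~~ ((u == i) && (v == i.+1)) -> ~~ ((u == i.+1) && (v == i)) ->
  (sw i u < sw i v) = (u < v).
Proof. rewrite /sw; do !case: eqP => //=; lia. Qed.

Lemma count_one_diff (T : eqType) (p q : pred T) (s : seq T) z :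
  uniq s -> z \in s -> p z -> ~~ q z -> {in s, forall w, w != z -> p w = q w} ->
  count p s = (count q s).+1.
Proof.
move=> Hu Hz Hp Hq H.
rewrite !(permP (perm_to_rem Hz)) /= Hp (negbTE Hq) /= add1n add0n; congr S.
apply: eq_in_count => w; rewrite (mem_rem_uniq _ Hu) inE => /andP[Hw Hws].
exact: H.
Qed.

Section Swap.
Variables a b : seq nat.
Local Notation C := (cells a b).
Local Notation n := (skew_size a b).

Definition inv (f : nat * nat -> nat) :=
  count (fun p : (nat * nat) * (nat * nat) => (p.1.1 < p.2.1) && (f p.2 < f p.1))
    [seq (c, d) | c <- C, d <- C].

Lemma entry_swap i T c : 0 < i -> entry b (swap_i i T) c = sw i (entry b T c).
Proof.
move=> Hi; rewrite /entry /swap_i (@nth_map_def _ _ (map (sw i)) [::] [::]) //.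
rewrite (@nth_map_def _ _ (sw i) 0 0) // /sw; case: eqP => //; lia.
Qed.

Lemma shape_swap i T : shapeOK a b T -> shapeOK a b (swap_i i T).
Proof.
case=> Hs Hr; split; first by rewrite size_map.
move=> r Hr'; rewrite /swap_i (@nth_map_def _ _ (map (sw i)) [::] [::]) //.
by rewrite size_map Hr.
Qed.

Lemma perm_sw i : 0 < i -> i < n -> perm_eq (map (sw i) (iota 1 n)) (iota 1 n).
Proof.
move=> H1 H2; apply: uniq_perm; rewrite ?map_inj_uniq ?iota_uniq //.
  exact: can_inj (swK i).
move=> v; rewrite -{1}(swK i v) (mem_map (can_inj (swK i))) !mem_iota /sw.
do !case: eqP => //=; lia.
Qed.

Lemma swap_props T x y : is_filling a b T -> rows_increasing T -> x \in C -> y \in C ->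
  y.1 < x.1 -> entry b T y = (entry b T x).+1 ->
  [/\ pi_step a b T (swap_i (entry b T x) T),
      is_filling a b (swap_i (entry b T x) T),
      rows_increasing (swap_i (entry b T x) T),
      inv (entry b T) = (inv (entry b (swap_i (entry b T x) T))).+1 &
      forall c d, c \in C -> d \in C ->
        (entry b (swap_i (entry b T x) T) c < entry b (swap_i (entry b T x) T) d) =
        (if (c == y) && (d == x) then true
         else if (c == x) && (d == y) then false
         else entry b T c < entry b T d)].
Proof.
move=> HF HR Hx Hy Hyx Exy.
have Hxr := entry_range HF Hx; have Hyr := entry_range HF Hy.
have Hinj := inj_entry HF.
set f := entry b T in Hxr Hyr Exy Hinj *; set i := f x in Hxr Hyr Exy *; set T' := swap_i i T.
have Hi : 0 < i by lia.
have Hin : i < n by move: Hyr; rewrite Exy; lia.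
have Ef : forall c, entry b T' c = sw i (f c) by move=> c; exact: entry_swap.
have Hxy : x != y by apply/eqP => E; move: Hyx; rewrite E ltnn.
have char : forall c d, c \in C -> d \in C ->
        (entry b T' c < entry b T' d) =
        (if (c == y) && (d == x) then true
         else if (c == x) && (d == y) then false
         else f c < f d).
  move=> c d Hc Hd; rewrite !Ef.
  have Ex : forall c, c \in C -> (f c == i) = (c == x).
    move=> e He; apply/eqP/eqP => [E|->] //; exact: Hinj.
  have Ey : forall c, c \in C -> (f c == i.+1) = (c == y).
    move=> e He; apply/eqP/eqP => [E|->] //; apply: Hinj => //; by rewrite E Exy.
  rewrite -(Ex c Hc) -(Ex d Hd) -(Ey c Hc) -(Ey d Hd).
  move: (f c) (f d) => u v; rewrite /sw; do !case: eqP => //=; lia.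
have HF' : is_filling a b T'.
  have Hsh : shapeOK a b T' := shape_swap i (filling_shape HF).
  split; try by case: Hsh.
  rewrite -(mkT_entry Hsh) flatten_mkT.
  rewrite (eq_map Ef) map_comp.
  apply: perm_trans (perm_sw Hi Hin); apply: perm_map; exact: filling_perm.
split => //.
- exists i; split => //; first by lia.
  have R1 : rowof T i = x.1 := rowof_entry HF Hx.
  have R2 : rowof T i.+1 = y.1 by rewrite -Exy; exact: rowof_entry HF Hy.
  rewrite /pi_op R1 R2.
  rewrite ltnNge (ltnW Hyx) /= ifT //; exact: Hyx.
- apply: cells_rowinc; first exact: filling_shape HF'.
  move=> c d Hc Hd E12 E2; rewrite char //.
  have Ncyx : ~~ ((c == y) && (d == x)).
    by apply/negP => /andP[/eqP Ec /eqP Ed]; move: Hyx; rewrite -Ec -Ed E12 ltnn.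
  have Ncxy : ~~ ((c == x) && (d == y)).
    by apply/negP => /andP[/eqP Ec /eqP Ed]; move: Hyx; rewrite -Ec -Ed E12 ltnn.
  rewrite (negbTE Ncyx) (negbTE Ncxy).
  exact: (rowinc_cells (filling_shape HF) HR).
- rewrite /inv; apply: (@count_one_diff _ _ _ _ (y, x)).
  + apply: allpairs_uniq; try exact: uniq_cells.
    by move=> [? ?] [? ?] _ _ /= [-> ->].
  + exact: allpairs_f.
  + by rewrite /= Hyx -/f Exy /=.
  + by rewrite /= char // !eqxx (negbTE Hxy) /= andbF.
  + move=> w /allpairsP [[c d] [/= Hc Hd ->]] Hw /=.
    rewrite char //.
    case: (d =P y) => [Edy|Ndy]; case: (c =P x) => [Ecx|Ncx] /=.
    * by rewrite Ecx Edy ltnNge (ltnW Hyx).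
    * case: (d =P x) => [Edx|Ndx]; case: (c =P y) => [Ecy|Ncy] //=.
      by move: Hw; rewrite Ecy Edx eqxx.
    * case: (d =P x) => [Edx|Ndx]; case: (c =P y) => [Ecy|Ncy] //=.
      by move: Hw; rewrite Ecy Edx eqxx.
    * case: (d =P x) => [Edx|Ndx]; case: (c =P y) => [Ecy|Ncy] //=.
      by move: Hw; rewrite Ecy Edx eqxx.
Qed.

End Swap.
Section Rel.
Variables a b : seq nat.
Local Notation C := (cells a b).
Local Notation n := (skew_size a b).

Definition wf T := is_filling a b T /\ rows_increasing T.
Definition subG (f g : nat * nat -> nat) := forall c d, c \in C -> d \in C ->
  c.1 < d.1 -> f c < f d -> g c < g d.

Lemma subG_trans f g h : subG f g -> subG g h -> subG f h.
Proof. by move=> H1 H2 c d Hc Hd H12 Hf; apply: H2 => //; apply: H1. Qed.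

Lemma subG_refl f : subG f f.
Proof. by []. Qed.

Lemma pi_step_cases T T' : wf T -> pi_step a b T T' ->
  T' = T \/ exists x y, [/\ x \in C, y \in C, y.1 < x.1,
        entry b T y = (entry b T x).+1 & T' = swap_i (entry b T x) T].
Proof.
case=> HF HR [i [H1 H2 Hop]].
have [x Hx Ex] : exists2 x, x \in C & entry b T x = i by apply: entry_ex => //; lia.
have [y Hy Ey] : exists2 y, y \in C & entry b T y = i.+1 by apply: entry_ex => //; lia.
have R1 : rowof T i = x.1 by rewrite -Ex; exact: (rowof_entry HF Hx).
have R2 : rowof T i.+1 = y.1 by rewrite -Ey; exact: (rowof_entry HF Hy).
move: Hop; rewrite /pi_op R1 R2.
case: ifP => [_ [<-] | _]; first by left.
case: ifP => // Hlt [<-]; right; exists x, y; split => //.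
all: by rewrite ?Ey ?Ex ?Hlt.
Qed.

Lemma step_inv T T' : wf T -> pi_step a b T T' ->
  [/\ wf T', subG (entry b T) (entry b T') &
      (T' = T \/ inv a b (entry b T) = (inv a b (entry b T')).+1)].
Proof.
move=> HW Hs; case: (pi_step_cases HW Hs) => [->|[x [y [Hx Hy Hyx Exy ->]]]].
  by split => //; left.
case: HW => HF HR.
have [_ HF' HR' Hinv char] := swap_props HF HR Hx Hy Hyx Exy.
split => //; last by right.
move=> c d Hc Hd H12 Hf; rewrite char //.
case: (c =P y) => [Ecy|Ncy]; case: (d =P x) => [Edx|Ndx] //=.
- case: (c =P x) => [Ecx|Ncx]; case: (d =P y) => [Edy|Ndy] //=.
  by move: Hyx; rewrite -Ecx -Edy ltnNge (ltnW H12).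
- case: (c =P x) => [Ecx|Ncx]; case: (d =P y) => [Edy|Ndy] //=.
  by move: Hyx; rewrite -Ecx -Edy ltnNge (ltnW H12).
- case: (c =P x) => [Ecx|Ncx]; case: (d =P y) => [Edy|Ndy] //=.
  by move: Hyx; rewrite -Ecx -Edy ltnNge (ltnW H12).
Qed.

Lemma le_inv T U : sit_le a b T U -> wf T ->
  [/\ wf U, subG (entry b T) (entry b U),
      inv a b (entry b U) <= inv a b (entry b T) &
      (U = T \/ inv a b (entry b U) < inv a b (entry b T))].
Proof.
elim=> [T0|T0 T1 T2 Hs Hle IH] HW; first by split => //; left.
have [HW1 Hsub1 Hc1] := step_inv HW Hs.
have [HW2 Hsub2 Hi2 Hc2] := IH HW1.
split => //; first exact: subG_trans Hsub2.
  case: Hc1 => [E|->]; last by apply: leq_trans Hi2 _.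
  by move: Hi2; rewrite E.
case: Hc1 => [E|E].
  by move: Hc2; rewrite E.
by right; rewrite E; apply: leq_ltn_trans Hi2 _.
Qed.

Lemma step_toward T U : wf T -> wf U -> subG (entry b T) (entry b U) -> T <> U ->
  exists x y, [/\ x \in C, y \in C, y.1 < x.1,
     entry b T y = (entry b T x).+1 & entry b U y < entry b U x].
Proof.
move=> [HF HR] [HF' HR'] Hsub HTU.
set f := entry b T; set g := entry b U.
have Hinjf := inj_entry HF; have Hinjg := inj_entry HF'.
have [[c' d'] Hcd /andP[/= Hfcd Hgdc]] : exists2 cd, cd \in [seq (c, d) | c <- C, d <- C] &
    (f cd.1 < f cd.2) && (g cd.2 < g cd.1).
  apply/hasP; apply/negPn/negP => /hasPn Hn; apply: HTU.
  rewrite -(mkT_entry (filling_shape HF)) -(mkT_entry (filling_shape HF')).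
  apply: mkT_eq_in => c Hc.
  rewrite (entry_count HF Hc) (entry_count HF' Hc); congr S.
  apply: eq_in_count => d Hd /=.
  have Hcd := Hn (d, c) (allpairs_f pair Hd Hc).
  have Hdc := Hn (c, d) (allpairs_f pair Hc Hd).
  rewrite /= in Hcd Hdc.
  apply/idP/idP => H.
    case: (ltngtP (g d) (g c)) => // H'.
      by move: Hcd; rewrite -/f -/g H H'.
    by move: H; rewrite (Hinjg _ _ Hd Hc H') ltnn.
  case: (ltngtP (f d) (f c)) => // H'.
    by move: Hdc; rewrite -/f -/g H H'.
  by move: H; rewrite (Hinjf _ _ Hd Hc H') ltnn.
have /allpairsP [[c'' d''] [/= Hc Hd [E1 E2]]] := Hcd; subst c'' d''.
have desc : forall k c d, c \in C -> d \in C -> f c < f d -> f d - f c <= k ->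
    g d < g c -> exists x y, [/\ x \in C, y \in C, f y = (f x).+1 & g y < g x].
  elim=> [|k IH] c0 d0 Hc0 Hd0 H1 H2 H3; first by lia.
  have Hr : 0 < f d0 <= n := entry_range HF Hd0.
  have [w Hw Ew] : exists2 w, w \in C & f w = (f c0).+1.
    by apply: entry_ex => //; lia.
  case: (ltnP (g w) (g c0)) => Hwc.
    by exists c0, w.
  case: (eqVneq w d0) => [Ewd|Nwd].
    by move: H3; rewrite -Ewd; lia.
  have Hwd : f w < f d0.
    have : f w != f d0 by apply/eqP => E; move/eqP: Nwd; apply; apply: Hinjf.
    lia.
  apply: (IH w d0) => //; lia.
have [x [y [Hx Hy Exy Hg]]] := desc _ c' d' Hc Hd Hfcd (leqnn _) Hgdc.
exists x, y; split => //.
case: (ltngtP x.1 y.1) => // H12.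
  have Hfxy : f x < f y by rewrite Exy.
  by move: Hg; rewrite ltnNge (ltnW (Hsub _ _ Hx Hy H12 Hfxy)).
case: (ltngtP x.2 y.2) => H22.
- by move: Hg; rewrite ltnNge (ltnW (rowinc_cells (filling_shape HF') HR' Hx Hy H12 H22)).
- by move: Exy; have := rowinc_cells (filling_shape HF) HR Hy Hx (esym H12) H22; rewrite -/f; lia.
- have Exy' : x = y by move: H12 H22; case: x {Hx Hg Exy} => ? ?; case: y {Hy} => ? ? /= -> ->.
  by move: Exy; rewrite Exy'; lia.
Qed.

Lemma path_le T U : wf T -> wf U -> subG (entry b T) (entry b U) -> sit_le a b T U.
Proof.
move Hm: (inv a b (entry b T)) => m; elim: m T Hm => [|m IH] T Hm HT HU Hsub.
  all: case: (eqVneq T U) => [->|NTU]; first exact: sit_le_refl.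
  all: have [x [y [Hx Hy Hyx Exy Hg]]] := step_toward HT HU Hsub (elimN eqP NTU).
  all: case: (HT) => HF HR.
  all: have [Hst HF' HR' Hinv char] := swap_props HF HR Hx Hy Hyx Exy.
  all: try by move: Hinv; rewrite Hm.
apply: sit_le_step Hst _; apply: IH.
- by move: Hinv; rewrite Hm => [[]].
- by [].
- by [].
move=> c d Hc Hd H12; rewrite char //.
case: (c =P y) => [Ecy|Ncy]; case: (d =P x) => [Edx|Ndx] //=.
- by rewrite Ecy Edx.
- case: (c =P x) => [Ecx|Ncx]; case: (d =P y) => [Edy|Ndy] //=; exact: Hsub.
- case: (c =P x) => [Ecx|Ncx]; case: (d =P y) => [Edy|Ndy] //=; exact: Hsub.
- case: (c =P x) => [Ecx|Ncx]; case: (d =P y) => [Edy|Ndy] //=; exact: Hsub.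
Qed.

End Rel.
Lemma sum_bool_count (T : Type) (q : pred T) (s : seq T) :
  \sum_(c <- s) (q c : nat) = count q s.
Proof. by elim: s => [|x s IH]; rewrite ?big_nil ?big_cons ?IH. Qed.

Lemma count_allpairs (P : pred ((nat * nat) * (nat * nat))) (s t : seq (nat * nat)) :
  count P [seq (c, d) | c <- s, d <- t] = \sum_(c <- s) count (fun d => P (c, d)) t.
Proof.
elim: s => [|c s IH] /=; first by rewrite big_nil.
by rewrite count_cat big_cons IH count_map.
Qed.

Lemma tourn (s : seq (nat * nat)) (P : nat * nat -> nat * nat -> bool) :
  uniq s -> (forall c, ~~ P c c) -> (forall c d, c != d -> P c d != P d c) ->
  \sum_(c <- s) count (P c) s = 'C(size s, 2).
Proof.
move=> + Hirr Hx; elim: s => [|x s IH] /=; first by rewrite big_nil.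
case/andP=> Hxs Hu.
rewrite big_cons /= (negbTE (Hirr x)) add0n.
have -> : \sum_(c <- s) count (P c) (x :: s) =
          \sum_(c <- s) (P c x : nat) + \sum_(c <- s) count (P c) s by rewrite -big_split.
rewrite IH // sum_bool_count binS bin1.
have H1 : count (predU (P x) (fun c => P c x)) s = size s.
  rewrite -(count_predT s); apply: eq_in_count => c Hc /=.
  have Hcx : x != c by apply/eqP => E; move: Hxs; rewrite E Hc.
  by move: (Hx _ _ Hcx); case: (P x c); case: (P c x).
have H2 : count (predI (P x) (fun c => P c x)) s = 0.
  rewrite -(count_pred0 s); apply: eq_in_count => c Hc /=.
  have Hcx : x != c by apply/eqP => E; move: Hxs; rewrite E Hc.
  by move: (Hx _ _ Hcx); case: (P x c); case: (P c x).
have := count_predUI (P x) (fun c => P c x) s; rewrite H1 H2 addn0 => E.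
by rewrite E; lia.
Qed.

Lemma part_mono (b : seq nat) i j : is_partition b -> i <= j -> nth 0 b j <= nth 0 b i.
Proof.
move=> Hp Hij; case: (ltnP j (size b)) => Hj; last by rewrite nth_default.
have Ht : transitive (geq : rel nat) by move=> x y z /= H1 H2; apply: leq_trans H2 H1.
have := sorted_leq_nth Ht (fun x => leqnn x) 0 Hp; apply => //; rewrite inE; lia.
Qed.

Section Rank.
Variables a b : seq nat.
Local Notation C := (cells a b).
Local Notation n := (skew_size a b).
Variable lt : rel (nat * nat).
Hypothesis Hirr : forall c, ~~ lt c c.
Hypothesis Htr : transitive lt.
Hypothesis Htot : forall c d, c != d -> lt c d || lt d c.

Definition rk c := (count (fun e => lt e c) C).+1.

Lemma rk_lt_aux c d : c \in C -> d \in C -> lt d c -> rk d < rk c.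
Proof.
move=> Hc Hd H; rewrite /rk ltnS.
have H1 : count (predU (fun e => lt e d) (pred1 d)) C <= count (fun e => lt e c) C.
  apply: sub_count => e /= /orP[He|/eqP ->] //; exact: Htr He H.
have H2 : count (predI (fun e => lt e d) (pred1 d)) C = 0.
  rewrite -(count_pred0 C); apply: eq_count => e /=.
  by case: (e =P d) => [->|_]; rewrite ?(negbTE (Hirr d)) ?andbF.
have H3 : 0 < count (pred1 d) C.
  by rewrite -has_count; apply/hasP; exists d; [exact: Hd | exact: eqxx].
have := count_predUI (fun e => lt e d) (pred1 d) C; rewrite H2 addn0 => E.
rewrite E in H1; apply: leq_trans H1; rewrite -addn1 leq_add2l; exact: H3.
Qed.

Lemma rk_lt c d : c \in C -> d \in C -> (rk d < rk c) = lt d c.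
Proof.
move=> Hc Hd; apply/idP/idP; last exact: rk_lt_aux.
case: (eqVneq c d) => [->|Ncd]; first by rewrite ltnn.
case/orP: (Htot Ncd) => // H1 H2.
by have := rk_lt_aux Hd Hc H1; lia.
Qed.

Lemma rk_perm : perm_eq (map rk C) (iota 1 n).
Proof.
have Hu : uniq (map rk C).
  rewrite map_inj_in_uniq ?uniq_cells // => c d Hc Hd E.
  apply/eqP; apply/negP => /negP Ncd; case/orP: (Htot Ncd) => H.
    by move: E; have := rk_lt_aux Hd Hc H; lia.
  by move: E; have := rk_lt_aux Hc Hd H; lia.
have Hsub : {subset map rk C <= iota 1 n}.
  move=> v /mapP [c Hc ->]; rewrite mem_iota /rk /skew_size.
  have : count (fun e => lt e c) C < size C.
    rewrite -(count_predC (fun e => lt e c)) -addn1 leq_add2l -has_count.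
    by apply/hasP; exists c => //=; rewrite Hirr.
  lia.
have [_ Heq] := uniq_min_size Hu Hsub (eq_leq (esym (etrans (size_map _ _) (esym (size_iota 1 n))))).
apply: uniq_perm => //; exact: iota_uniq.
Qed.

Lemma wf_rk : (forall c d, c.1 = d.1 -> c.2 < d.2 -> lt c d) -> wf a b (mkT a b rk).
Proof.
move=> Hrow; split.
  split; try by case: (shape_mkT a b rk).
  by rewrite flatten_mkT; exact: rk_perm.
apply: cells_rowinc; first exact: shape_mkT.
by move=> c d Hc Hd H1 H2; rewrite !entry_mkT // rk_lt //; apply: Hrow.
Qed.

End Rank.
Definition ltc (d c : nat * nat) := (d.2 < c.2) || ((d.2 == c.2) && (d.1 < c.1)).
Definition ltr (d c : nat * nat) := (d.1 < c.1) || ((d.1 == c.1) && (d.2 < c.2)).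

Lemma ltc_irr c : ~~ ltc c c.
Proof. case: c => x1 x2; rewrite /ltc /=; lia. Qed.
Lemma ltc_tr : transitive ltc.
Proof. move=> [x1 x2] [y1 y2] [z1 z2]; rewrite /ltc /=; lia. Qed.
Lemma ltc_tot c d : c != d -> ltc c d || ltc d c.
Proof. case: c d => [x1 x2] [y1 y2]; rewrite /ltc /= xpair_eqE; lia. Qed.
Lemma ltr_irr c : ~~ ltr c c.
Proof. case: c => x1 x2; rewrite /ltr /=; lia. Qed.
Lemma ltr_tr : transitive ltr.
Proof. move=> [x1 x2] [y1 y2] [z1 z2]; rewrite /ltr /=; lia. Qed.
Lemma ltr_tot c d : c != d -> ltr c d || ltr d c.
Proof. case: c d => [x1 x2] [y1 y2]; rewrite /ltr /= xpair_eqE; lia. Qed.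

Section Main.
Variables a b : seq nat.
Local Notation C := (cells a b).
Local Notation n := (skew_size a b).
Local Notation Scol := (S_col a b).
Local Notation Srow := (S_row a b).

Lemma Scol_E : Scol = mkT a b (rk a b ltc). Proof. by []. Qed.
Lemma Srow_E : Srow = mkT a b (rk a b ltr). Proof. by []. Qed.

Lemma entry_Scol c : c \in C -> entry b Scol c = rk a b ltc c.
Proof. by move=> Hc; rewrite Scol_E entry_mkT. Qed.
Lemma entry_Srow c : c \in C -> entry b Srow c = rk a b ltr c.
Proof. by move=> Hc; rewrite Srow_E entry_mkT. Qed.

Lemma wf_Scol : wf a b Scol.
Proof.
rewrite Scol_E; apply: wf_rk; [exact: ltc_irr|exact: ltc_tr|exact: ltc_tot|].
by move=> [x1 x2] [y1 y2]; rewrite /ltc /=; lia.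
Qed.

Lemma wf_Srow : wf a b Srow.
Proof.
rewrite Srow_E; apply: wf_rk; [exact: ltr_irr|exact: ltr_tr|exact: ltr_tot|].
by move=> [x1 x2] [y1 y2]; rewrite /ltr /=; lia.
Qed.

Lemma sub_row f : subG a b f (entry b Srow).
Proof.
move=> c d Hc Hd H12 _; rewrite !entry_Srow // rk_lt //;
  [|exact: ltr_irr|exact: ltr_tr|exact: ltr_tot].
by move: H12; case: c {Hc} => x1 x2; case: d {Hd} => y1 y2; rewrite /ltr /=; lia.
Qed.

Lemma SET_iff T : is_partition b ->
  (SET a b T <-> wf a b T /\ subG a b (entry b Scol) (entry b T)).
Proof.
move=> Hp; split.
  case=> HF HR Hcol; split => //.
  move=> [x1 x2] [y1 y2] Hc Hd /= H12; rewrite !entry_Scol // rk_lt //;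
    [|exact: ltc_irr|exact: ltc_tr|exact: ltc_tot].
  rewrite /ltc /= => Hlt.
  have Hle : x2 <= y2 by lia.
  have He : (y1, x2) \in C.
    move: Hc Hd; rewrite !mem_cells /= => /and3P[Hc1 Hc2 Hc3] /and3P[Hd1 Hd2 Hd3].
    have Hm := part_mono Hp (ltnW H12).
    apply/and3P; split => //; lia.
  have H1 : entry b T (x1, x2) < entry b T (y1, x2) by apply: Hcol.
  apply: (leq_trans H1).
  case: (ltngtP x2 y2) => [H2|H2|H2].
  - by apply: ltnW; apply: (rowinc_cells (filling_shape HF) HR) => //.
  - by move: Hle; rewrite leqNgt H2.
  - by rewrite H2.
case=> [[HF HR] Hsub]; split => // c d Hc Hd H2 H1; apply: Hsub => //.
rewrite !entry_Scol // rk_lt //; [|exact: ltc_irr|exact: ltc_tr|exact: ltc_tot].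
by move: H1 H2; case: c {Hc} => x1 x2; case: d {Hd} => y1 y2; rewrite /ltc /=; lia.
Qed.

Lemma SET_SIT T : composition a -> SET a b T -> SIT a b T.
Proof.
move=> Ha HS; have [HF HR Hcol] := HS; split => // r r' Hrr' Hr' Hb Hb'.
have Hpos : forall k, k < size a -> 0 < nth 0 a k.
  by move=> k Hk; move/all_nthP: Ha; apply.
apply: Hcol => //; rewrite mem_cells /= ?Hb ?Hb'; apply/and3P; split => //;
  try apply: Hpos; lia.
Qed.

Lemma inv_Srow : inv a b (entry b Srow) = 0.
Proof.
rewrite /inv; apply/eqP; rewrite -leqn0 leqNgt -has_count; apply/hasPn.
move=> p /allpairsP [[c d] [/= Hc Hd ->]] /=.
rewrite !entry_Srow // rk_lt //; [|exact: ltr_irr|exact: ltr_tr|exact: ltr_tot].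
by case: c {Hc} => x1 x2; case: d {Hd} => y1 y2; rewrite /ltr /=; lia.
Qed.

Lemma chain_ex m T : wf a b T -> subG a b (entry b Scol) (entry b T) ->
  inv a b (entry b T) = m ->
  exists s, [/\ size s = m,
    (forall U, U \in s -> wf a b U /\ subG a b (entry b Scol) (entry b U)) &
    strict_chain a b (T :: s)].
Proof.
elim: m T => [|m IH] T HW Hsub Hm.
  by exists [::]; split.
have NT : T <> Srow by move=> E; move: Hm; rewrite E inv_Srow.
have [x [y [Hx Hy Hyx Exy _]]] := step_toward HW wf_Srow (@sub_row (entry b T)) NT.
case: (HW) => HF HR.
have [Hst HF' HR' Hinv _] := swap_props HF HR Hx Hy Hyx Exy.
set T' := swap_i (entry b T x) T in Hst HF' HR' Hinv *.
have [_ Hsub' _] := step_inv HW Hst.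
have Hsub2 := subG_trans Hsub Hsub'.
have Hm' : inv a b (entry b T') = m by move: Hinv; rewrite Hm => [[]].
have [s [Hs Hall Hch]] := IH T' (conj HF' HR') Hsub2 Hm'.
exists (T' :: s); split => //=.
- by rewrite Hs.
- by move=> U; rewrite inE => /orP[/eqP ->|/Hall].
split => //; split; first exact: sit_le_step Hst (sit_le_refl _ _ _).
by move=> E; move: Hinv; rewrite -E; lia.
Qed.

Lemma chain_bound s x : (forall U, U \in x :: s -> wf a b U) ->
  strict_chain a b (x :: s) -> size s <= inv a b (entry b x).
Proof.
elim: s x => [//|y s IH] x Hall [[Hle Nxy] Hch] /=.
have Hx : wf a b x by apply: Hall; rewrite inE eqxx.
have [_ _ _ [E|Hlt]] := le_inv Hle Hx; first by case: Nxy.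
have Hall' : forall U, U \in y :: s -> wf a b U.
  by move=> U HU; apply: Hall; rewrite in_cons HU orbT.
exact: leq_ltn_trans (IH y Hall' Hch) Hlt.
Qed.

End Main.
Lemma count_main a b :
  inv a b (entry b (S_col a b)) + \sum_(c <- cells a b) ls a b c = 'C(skew_size a b, 2).
Proof.
rewrite /inv count_allpairs -big_split /=.
rewrite (eq_big_seq (fun c => count (fun d => ((c.1 < d.1) && ltc d c) ||
            [&& d != c, d.1 <= c.1 & d.2 <= c.2]) (cells a b))).
  apply: tourn; first exact: uniq_cells.
    by move=> [x1 x2]; rewrite /ltc /= !xpair_eqE; lia.
  by move=> [x1 x2] [y1 y2]; rewrite /ltc /= !xpair_eqE; lia.
move=> c Hc /=; rewrite /ls.
have -> : count (fun d => (c.1 < d.1) && (entry b (S_col a b) d < entry b (S_col a b) c))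
              (cells a b) = count (fun d => (c.1 < d.1) && ltc d c) (cells a b).
  apply: eq_in_count => d Hd /=.
  by rewrite !entry_Scol // rk_lt //; [exact: ltc_irr|exact: ltc_tr|exact: ltc_tot].
have := count_predUI (fun d => (c.1 < d.1) && ltc d c)
          (fun d => [&& d != c, d.1 <= c.1 & d.2 <= c.2]) (cells a b).
have -> : count (predI (fun d => (c.1 < d.1) && ltc d c)
          (fun d => [&& d != c, d.1 <= c.1 & d.2 <= c.2])) (cells a b) = 0.
  rewrite -(count_pred0 (cells a b)); apply: eq_count => d /=.
  by case: c {Hc} => x1 x2; case: d => y1 y2; rewrite /ltc /= !xpair_eqE; lia.
by rewrite addn0 => <-.
Qed.

Theorem corollary4p3 (a b : seq nat) :
  composition a -> composition b -> subcomp b a -> reduced a b ->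
  is_partition b ->
  [/\ SET_minimal a b (S_col a b),
      (forall T, SET_minimal a b T -> T = S_col a b),
      (forall T, SET a b T <->
         [/\ SIT a b T, sit_le a b (S_col a b) T & sit_le a b T (S_row a b)])
    & exists r, SET_rank a b r /\
        r + \sum_(c <- cells a b) ls a b c = 'C(skew_size a b, 2)].
Proof.
move=> Ha _ _ _ Hp.
have SETS : SET a b (S_col a b).
  by apply/(SET_iff a _ Hp); split; [exact: (wf_Scol a b) | exact: subG_refl].
have Hmin : SET_minimal a b (S_col a b).
  split => // T' HT' Hle.
  have [HW' Hs'] := (SET_iff a _ Hp).1 HT'.
  have [_ _ Hi1 _] := le_inv (path_le (wf_Scol a b) HW' Hs') (wf_Scol a b).
  have [_ _ _ [E|Hi2]] := le_inv Hle HW'; first by rewrite E.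
  by move: (leq_ltn_trans Hi1 Hi2); rewrite ltnn.
split => //.
- move=> T [HT Hm]; apply: esym; apply: Hm => //.
  have [HW Hs] := (SET_iff a _ Hp).1 HT.
  exact: path_le (wf_Scol a b) HW Hs.
- move=> T; split.
    move=> HT; have [HW Hs] := (SET_iff a _ Hp).1 HT; split.
    + exact: SET_SIT.
    + exact: path_le (wf_Scol a b) HW Hs.
    + exact: path_le HW (wf_Srow a b) (@sub_row a b (entry b T)).
  case=> [[HF HR _] Hle _]; apply/(SET_iff a _ Hp).
  have [_ Hs _ _] := le_inv Hle (wf_Scol a b).
  by split.
- exists (inv a b (entry b (S_col a b))); split; last exact: count_main.
  split.
    have [s [Hs Hall Hch]] := chain_ex (wf_Scol a b) (@subG_refl a b (entry b (S_col a b))) (erefl _).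
    exists (S_col a b :: s); split => //=; first by rewrite Hs.
    move=> U; rewrite inE => /orP[/eqP ->|/Hall HU] //.
    exact/(SET_iff a _ Hp).
  case=> [//|x s] Hall Hch.
  have Hw : forall U, U \in x :: s -> wf a b U.
    by move=> U HU; have [] := (SET_iff a _ Hp).1 (Hall U HU).
  have H := chain_bound Hw Hch.
  have [Hwx Hsx] := (SET_iff a _ Hp).1 (Hall x (mem_head _ _)).
  have [_ _ Hi _] := le_inv (path_le (wf_Scol a b) Hwx Hsx) (wf_Scol a b).
  by rewrite /= ltnS; exact: leq_trans H Hi.
Qed.
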